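(* Let $p\le q$ be positive integers. The complete bipartite graph $K_{p,q}$ is a TRVG with respect to the torus if and only if $p\le 2$ or $(p,q)\in\{(3,3),(3,4),(3,5),(3,6),(4,4)\}$.
   Context: View the torus as an axis-parallel rectangle $[0,W]\times[0,H]$ with opposite sides identified. Horizontal lines $y=c$ and vertical lines $x=c$ are then closed curves on the torus. A graph $G$ is a TRVG with respect to the torus if its vertices can be represented by a collection of pairwise non-overlapping axis-parallel rectangles on this torus (a rectangle may wrap across the identified sides), one per vertex, such that two distinct vertices are adjacent if and only if some horizontal or vertical line of the torus intersects the interiors of both of their rectangles (other rectangles do not block visibility). *)

(* Defs.v *)
From Stdlib Require Import Reals ZArith Arith.
Open Scope R_scope.

(* A point of the circle R/(L Z) is represented by any real x.
   The open arc of the circle of length L starting at a, of length l,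
   is { x mod L | a < x < a + l }. *)
Definition in_arc (L a l x : R) : Prop :=
  exists k : Z, a < x + IZR k * L < a + l.

(* An axis-parallel rectangle on the torus R^2/(W Z x H Z):
   x-range is the open arc starting at rx of length rw,
   y-range is the open arc starting at ry of length rh (its interior). *)
Record rect := mkRect { rx : R; ry : R; rw : R; rh : R }.

Definition valid_rect (W H : R) (r : rect) : Prop :=
  0 < rw r < W /\ 0 < rh r < H.

Definition in_interior (W H : R) (r : rect) (x y : R) : Prop :=
  in_arc W (rx r) (rw r) x /\ in_arc H (ry r) (rh r) y.

Definition interiors_overlap (W H : R) (r s : rect) : Prop :=
  exists x y, in_interior W H r x y /\ in_interior W H s x y.

Definition h_visible (H : R) (r s : rect) : Prop :=
  exists c, in_arc H (ry r) (rh r) c /\ in_arc H (ry s) (rh s) c.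

Definition v_visible (W : R) (r s : rect) : Prop :=
  exists c, in_arc W (rx r) (rw r) c /\ in_arc W (rx s) (rw s) c.

Definition TRVG {V : Type} (adj : V -> V -> Prop) : Prop :=
  exists (W H : R) (f : V -> rect),
    0 < W /\ 0 < H /\
    (forall v, valid_rect W H (f v)) /\
    (forall u v, u <> v -> ~ interiors_overlap W H (f u) (f v)) /\
    (forall u v, u <> v ->
       (adj u v <-> (h_visible H (f u) (f v) \/ v_visible W (f u) (f v)))).

Definition Kpq_vertex (p q : nat) : Type :=
  ({i : nat | (i < p)%nat} + {j : nat | (j < q)%nat})%type.

Definition Kpq_adj (p q : nat) (u v : Kpq_vertex p q) : Prop :=
  match u, v with
  | inl _, inr _ => True
  | inr _, inl _ => True
  | _, _ => False
  end.

(* Main.v *)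
Require Import Defs.
From Stdlib Require Import Reals Arith.
From Stdlib Require Import Lra Lia ZArith Classical.
Open Scope R_scope.

Definition meet (L a1 l1 a2 l2 : R) : Prop :=
  exists x, in_arc L a1 l1 x /\ in_arc L a2 l2 x.

Definition m3 (L a1 l1 a2 l2 : R) : Prop :=
  (a1 < a2 - L + l2 /\ a2 - L < a1 + l1) \/ (a1 < a2 + l2 /\ a2 < a1 + l1) \/
  (a1 < a2 + L + l2 /\ a2 + L < a1 + l1).

Definition hin (L a l x : R) : Prop := exists k : Z, a <= x + IZR k * L < a + l.

Lemma meet_sym L a1 l1 a2 l2 : meet L a1 l1 a2 l2 -> meet L a2 l2 a1 l1.
Proof. intros [x [H1 H2]]; exists x; split; assumption. Qed.

Lemma interval_meet a b la lb : a < b + lb -> b < a + la -> 0 < la -> 0 < lb ->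
  exists x, a < x < a + la /\ b < x < b + lb.
Proof.
  intros H1 H2 H3 H4.
  destruct (Rle_dec a b); destruct (Rle_dec (a + la) (b + lb)).
  - exists ((b + (a+la))/2); lra.
  - exists ((b + (b+lb))/2); lra.
  - exists ((a + (a+la))/2); lra.
  - exists ((a + (b+lb))/2); lra.
Qed.

Lemma meet_iff L a1 l1 a2 l2 : 0 < L -> 0 <= a1 < L -> 0 <= a2 < L ->
  0 < l1 < L -> 0 < l2 < L -> (meet L a1 l1 a2 l2 <-> m3 L a1 l1 a2 l2).
Proof.
  intros HL Ha1 Ha2 Hl1 Hl2; split.
  - intros [x [[k1 H1] [k2 H2]]].
    set (K := (k1 - k2)%Z).
    assert (HK : IZR K = IZR k1 - IZR k2) by (unfold K; apply minus_IZR).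
    assert (E1 : a1 < a2 + IZR K * L + l2) by (rewrite HK; nra).
    assert (E2 : a2 + IZR K * L < a1 + l1) by (rewrite HK; nra).
    assert (B1 : IZR K < 2).
    { apply (Rmult_lt_reg_r L); lra. }
    assert (B2 : -2 < IZR K).
    { apply (Rmult_lt_reg_r L); lra. }
    apply lt_IZR in B1. apply lt_IZR in B2.
    assert (HK3 : (K = -1 \/ K = 0 \/ K = 1)%Z) by lia.
    unfold m3.
    destruct HK3 as [e|[e|e]]; rewrite e in E1, E2.
    + left; lra.
    + right; left; lra.
    + right; right; lra.
  - intros [[H1 H2]|[[H1 H2]|[H1 H2]]].
    + destruct (interval_meet a1 (a2 - L) l1 l2) as [x Hx]; try lra.
      exists x; split; [exists 0%Z | exists 1%Z]; lra.
    + destruct (interval_meet a1 a2 l1 l2) as [x Hx]; try lra.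
      exists x; split; [exists 0%Z | exists 0%Z]; lra.
    + destruct (interval_meet a1 (a2 + L) l1 l2) as [x Hx]; try lra.
      exists x; split; [exists 0%Z | exists (-1)%Z]; lra.
Qed.

Lemma start_cases L a1 l1 a2 l2 : meet L a1 l1 a2 l2 -> hin L a2 l2 a1 \/ hin L a1 l1 a2.
Proof.
  intros [x [[k1 H1] [k2 H2]]].
  set (D := (k2 - k1)%Z).
  assert (HD : IZR D = IZR k2 - IZR k1) by (unfold D; apply minus_IZR).
  destruct (Rle_dec a2 (a1 + IZR D * L)).
  - left; exists D; rewrite HD in *; nra.
  - right; exists (- D)%Z; rewrite opp_IZR; rewrite HD in *; nra.
Qed.

Lemma harc_meet L a l a' l' x : hin L a l x -> hin L a' l' x -> meet L a l a' l'.
Proof.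
  intros [k H1] [k' H2].
  destruct (Rle_dec (a + l - (x + IZR k * L)) (a' + l' - (x + IZR k' * L))).
  - set (e := (a + l - (x + IZR k * L)) / 2).
    exists (x + e); split; [exists k | exists k']; unfold e; lra.
  - set (e := (a' + l' - (x + IZR k' * L)) / 2).
    exists (x + e); split; [exists k | exists k']; unfold e; lra.
Qed.

Lemma php (N M : nat) (Rl : nat -> nat -> Prop) :
  (forall n, (n < M)%nat -> exists c, (c < N)%nat /\ Rl n c) ->
  (forall n n' c, (n < M)%nat -> (n' < M)%nat -> Rl n c -> Rl n' c -> n = n') ->
  (M <= N)%nat.
Proof.
  revert M Rl; induction N as [|N IH]; intros M Rl Hex Hinj.
  - destruct M; [lia|]. destruct (Hex 0%nat) as [c [Hc _]]; lia.
  - destruct (classic (exists n, (n < M)%nat /\ Rl n N)) as [[n0 [Hn0 Rn0]]|Hno].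
    + set (s := fun n => if Nat.eq_dec n n0 then (M - 1)%nat else n).
      assert (Hs : forall n, (n < M - 1)%nat -> (s n < M)%nat /\ s n <> n0).
      { intros n Hn; unfold s; destruct (Nat.eq_dec n n0); lia. }
      assert (HM : (M - 1 <= N)%nat).
      { apply (IH (M - 1)%nat (fun n c => Rl (s n) c)).
        - intros n Hn. destruct (Hs n Hn) as [H1 H2].
          destruct (Hex (s n) H1) as [c [Hc Rc]].
          exists c; split; [|exact Rc].
          destruct (Nat.eq_dec c N) as [e|ne]; [|lia].
          subst c. exfalso; apply H2. apply (Hinj _ _ N H1 Hn0 Rc Rn0).
        - intros n n' c Hn Hn' R1 R2.
          destruct (Hs n Hn) as [H1 H2]; destruct (Hs n' Hn') as [H1' H2'].
          pose proof (Hinj _ _ c H1 H1' R1 R2) as E.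
          unfold s in E; destruct (Nat.eq_dec n n0); destruct (Nat.eq_dec n' n0); lia. }
      lia.
    + assert (M <= N)%nat; [|lia].
      apply (IH M Rl); [|exact Hinj].
      intros n Hn. destruct (Hex n Hn) as [c [Hc Rc]].
      exists c; split; [|exact Rc].
      destruct (Nat.eq_dec c N); [|lia]. subst; exfalso; apply Hno; exists n; auto.
Qed.

Definition per (W H : R) (d : bool) := if d then H else W.
Definition st (d : bool) (r : rect) := if d then ry r else rx r.
Definition ln (d : bool) (r : rect) := if d then rh r else rw r.
Definition mt W H d r s := meet (per W H d) (st d r) (ln d r) (st d s) (ln d s).

Lemma count (p q : nat) W H (fA fB : nat -> rect) :
  (forall d i i', (i < p)%nat -> (i' < p)%nat -> i <> i' -> ~ mt W H d (fA i) (fA i')) ->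
  (forall d j j', (j < q)%nat -> (j' < q)%nat -> j <> j' -> ~ mt W H d (fB j) (fB j')) ->
  (forall i j, (i < p)%nat -> (j < q)%nat -> exists d, mt W H d (fA i) (fB j)) ->
  (p * q <= 2 * (p + q))%nat.
Proof.
  intros hA hB hC.
  apply (php _ _ (fun n c => exists i j (d : bool) w, n = (i * q + j)%nat /\ (i < p)%nat /\ (j < q)%nat /\
     c = ((if d then p + q else 0) + w)%nat /\
     ((w = i /\ hin (per W H d) (st d (fB j)) (ln d (fB j)) (st d (fA i))) \/
      (w = (p + j)%nat /\ hin (per W H d) (st d (fA i)) (ln d (fA i)) (st d (fB j)))))).
  - intros n Hn.
    assert (Hq : q <> 0%nat) by (intro; subst; lia).
    pose proof (Nat.div_mod n q Hq) as E.
    pose proof (Nat.mod_upper_bound n q Hq) as Hj.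
    set (i := (n / q)%nat) in *. set (j := (n mod q)%nat) in *.
    assert (Hi : (i < p)%nat) by nia.
    destruct (hC i j Hi Hj) as [d Hd].
    destruct (start_cases _ _ _ _ _ Hd) as [Hs|Hs].
    + exists ((if d then p + q else 0) + i)%nat; split; [destruct d; lia|].
      exists i, j, d, i; repeat split; try lia; left; auto.
    + exists ((if d then p + q else 0) + (p + j))%nat; split; [destruct d; lia|].
      exists i, j, d, (p + j)%nat; repeat split; try lia; right; auto.
  - intros n n' c Hn Hn'
      [i [j [d [w [En [Hi [Hj [Ec Hw]]]]]]]] [i' [j' [d' [w' [En' [Hi' [Hj' [Ec' Hw']]]]]]]].
    destruct Hw as [[ew Hw]|[ew Hw]]; destruct Hw' as [[ew' Hw']|[ew' Hw']]; subst w w'.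
    + assert (d = d' /\ i = i') as [-> ->] by (destruct d, d'; split; try reflexivity; lia).
      destruct (Nat.eq_dec j j') as [->|ne]; [lia|].
      exfalso; apply (hB d' j j' Hj Hj' ne).
      exact (harc_meet _ _ _ _ _ _ Hw Hw').
    + exfalso; destruct d, d'; lia.
    + exfalso; destruct d, d'; lia.
    + assert (d = d' /\ j = j') as [-> ->] by (destruct d, d'; split; try reflexivity; lia).
      destruct (Nat.eq_dec i i') as [->|ne]; [lia|].
      exfalso; apply (hA d' i i' Hi Hi' ne).
      exact (harc_meet _ _ _ _ _ _ Hw Hw').
Qed.

Lemma necessity (p q : nat) : TRVG (Kpq_adj p q) -> (p * q <= 2 * (p + q))%nat.
Proof.
  intros [W [H [f [HW [HH [Hval [Hov Hadj]]]]]]].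
  set (fA := fun i => match lt_dec i p with
                      | left Hi => f (inl (exist _ i Hi)) | right _ => mkRect 0 0 0 0 end).
  set (fB := fun j => match lt_dec j q with
                      | left Hj => f (inr (exist _ j Hj)) | right _ => mkRect 0 0 0 0 end).
  assert (EA : forall i, (i < p)%nat -> exists Hi, fA i = f (inl (exist _ i Hi))).
  { intros i Hi; unfold fA; destruct (lt_dec i p) as [l|n]; [exists l; reflexivity|contradiction]. }
  assert (EB : forall j, (j < q)%nat -> exists Hj, fB j = f (inr (exist _ j Hj))).
  { intros j Hj; unfold fB; destruct (lt_dec j q) as [l|n]; [exists l; reflexivity|contradiction]. }
  apply (count p q W H fA fB).
  - intros d i i' Hi Hi' ne Hm.
    destruct (EA i Hi) as [h1 e1]; destruct (EA i' Hi') as [h2 e2].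
    rewrite e1, e2 in Hm.
    assert (Hne : inl (exist _ i h1) <> (inl (exist _ i' h2) : Kpq_vertex p q)).
    { intro E; injection E; auto. }
    apply (proj2 (Hadj _ _ Hne)). destruct d; [left|right]; exact Hm.
  - intros d j j' Hj Hj' ne Hm.
    destruct (EB j Hj) as [h1 e1]; destruct (EB j' Hj') as [h2 e2].
    rewrite e1, e2 in Hm.
    assert (Hne : inr (exist _ j h1) <> (inr (exist _ j' h2) : Kpq_vertex p q)).
    { intro E; injection E; auto. }
    apply (proj2 (Hadj _ _ Hne)). destruct d; [left|right]; exact Hm.
  - intros i j Hi Hj.
    destruct (EA i Hi) as [h1 e1]; destruct (EB j Hj) as [h2 e2].
    rewrite e1, e2.
    assert (Hne : inl (exist _ i h1) <> (inr (exist _ j h2) : Kpq_vertex p q)) by discriminate.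
    destruct (proj1 (Hadj _ _ Hne) I) as [Hh|Hv]; [exists true|exists false]; assumption.
Qed.

Definition okr (W H : R) (r : rect) : Prop :=
  0 <= rx r < W /\ 0 <= ry r < H /\ 0 < rw r < W /\ 0 < rh r < H.

Lemma TRVG_bip (p q : nat) (W H : R) (fA fB : nat -> rect) :
  0 < W -> 0 < H ->
  (forall i, (i < p)%nat -> okr W H (fA i)) ->
  (forall j, (j < q)%nat -> okr W H (fB j)) ->
  (forall i i', (i < p)%nat -> (i' < p)%nat -> i <> i' ->
     ~ m3 W (rx (fA i)) (rw (fA i)) (rx (fA i')) (rw (fA i')) /\
     ~ m3 H (ry (fA i)) (rh (fA i)) (ry (fA i')) (rh (fA i'))) ->
  (forall j j', (j < q)%nat -> (j' < q)%nat -> j <> j' ->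
     ~ m3 W (rx (fB j)) (rw (fB j)) (rx (fB j')) (rw (fB j')) /\
     ~ m3 H (ry (fB j)) (rh (fB j)) (ry (fB j')) (rh (fB j'))) ->
  (forall i j, (i < p)%nat -> (j < q)%nat ->
     (m3 W (rx (fA i)) (rw (fA i)) (rx (fB j)) (rw (fB j)) \/
      m3 H (ry (fA i)) (rh (fA i)) (ry (fB j)) (rh (fB j))) /\
     ~ (m3 W (rx (fA i)) (rw (fA i)) (rx (fB j)) (rw (fB j)) /\
        m3 H (ry (fA i)) (rh (fA i)) (ry (fB j)) (rh (fB j)))) ->
  TRVG (Kpq_adj p q).
Proof.
  intros HW HH okA okB hA hB hC.
  assert (hA' : forall i i', (i < p)%nat -> (i' < p)%nat -> i <> i' ->
     ~ meet W (rx (fA i)) (rw (fA i)) (rx (fA i')) (rw (fA i')) /\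
     ~ meet H (ry (fA i)) (rh (fA i)) (ry (fA i')) (rh (fA i')) ).
  { intros i i' Hi Hi' ne. destruct (okA i Hi) as [a1 [a2 [a3 a4]]].
    destruct (okA i' Hi') as [b1 [b2 [b3 b4]]].
    rewrite !meet_iff by assumption. apply hA; assumption. }
  assert (hB' : forall j j', (j < q)%nat -> (j' < q)%nat -> j <> j' ->
     ~ meet W (rx (fB j)) (rw (fB j)) (rx (fB j')) (rw (fB j')) /\
     ~ meet H (ry (fB j)) (rh (fB j)) (ry (fB j')) (rh (fB j')) ).
  { intros i i' Hi Hi' ne. destruct (okB i Hi) as [a1 [a2 [a3 a4]]].
    destruct (okB i' Hi') as [b1 [b2 [b3 b4]]].
    rewrite !meet_iff by assumption. apply hB; assumption. }
  assert (hC' : forall i j, (i < p)%nat -> (j < q)%nat ->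
     (meet W (rx (fA i)) (rw (fA i)) (rx (fB j)) (rw (fB j)) \/
      meet H (ry (fA i)) (rh (fA i)) (ry (fB j)) (rh (fB j))) /\
     ~ (meet W (rx (fA i)) (rw (fA i)) (rx (fB j)) (rw (fB j)) /\
        meet H (ry (fA i)) (rh (fA i)) (ry (fB j)) (rh (fB j)))).
  { intros i i' Hi Hi'. destruct (okA i Hi) as [a1 [a2 [a3 a4]]].
    destruct (okB i' Hi') as [b1 [b2 [b3 b4]]].
    rewrite !meet_iff by assumption. apply hC; assumption. }
  exists W, H, (fun v => match v with inl a => fA (proj1_sig a) | inr b => fB (proj1_sig b) end).
  split; [exact HW|]. split; [exact HH|]. split; [|split].
  - intros [[i Hi]|[j Hj]]; simpl.
    + destruct (okA i Hi) as [_ [_ [a b]]]; split; assumption.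
    + destruct (okB j Hj) as [_ [_ [a b]]]; split; assumption.
  - intros [[i Hi]|[j Hj]] [[i' Hi']|[j' Hj']] Huv [x [y [[H1 H2] [H3 H4]]]]; simpl in *.
    + destruct (Nat.eq_dec i i') as [e|ne].
      * apply Huv; subst; do 2 f_equal; apply le_unique.
      * apply (proj1 (hA' i i' Hi Hi' ne)); exists x; split; assumption.
    + apply (proj2 (hC' i j' Hi Hj')); split; [exists x|exists y]; split; assumption.
    + apply (proj2 (hC' i' j Hi' Hj)); split; [exists x|exists y]; split; assumption.
    + destruct (Nat.eq_dec j j') as [e|ne].
      * apply Huv; subst; do 2 f_equal; apply le_unique.
      * apply (proj1 (hB' j j' Hj Hj' ne)); exists x; split; assumption.
  - intros [[i Hi]|[j Hj]] [[i' Hi']|[j' Hj']] Huv; simpl in *.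
    + destruct (Nat.eq_dec i i') as [e|ne].
      * exfalso; apply Huv; subst; do 2 f_equal; apply le_unique.
      * split; [intros []|]. intros [Hh|Hv].
        -- exact (proj2 (hA' i i' Hi Hi' ne) Hh).
        -- exact (proj1 (hA' i i' Hi Hi' ne) Hv).
    + split; [intros _|intros _; exact I].
      destruct (proj1 (hC' i j' Hi Hj')) as [Hx|Hy]; [right; exact Hx|left; exact Hy].
    + split; [intros _|intros _; exact I].
      destruct (proj1 (hC' i' j Hi' Hj)) as [Hx|Hy];
        [right; exact (meet_sym _ _ _ _ _ Hx)|left; exact (meet_sym _ _ _ _ _ Hy)].
    + destruct (Nat.eq_dec j j') as [e|ne].
      * exfalso; apply Huv; subst; do 2 f_equal; apply le_unique.
      * split; [intros []|]. intros [Hh|Hv].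
        -- exact (proj2 (hB' j j' Hj Hj' ne) Hh).
        -- exact (proj1 (hB' j j' Hj Hj' ne) Hv).
Qed.

Ltac solve_goal :=
  lazymatch goal with
  | |- _ /\ _ => split; solve_goal
  | |- ~ _ => let H := fresh in intro H; decompose [and or] H; lra
  | |- _ \/ _ => first [ left; solve_goal | right; solve_goal ]
  | |- _ => lra
  end.

Definition A36 (i : nat) : rect :=
  match i with 0 => mkRect 2 2 8 8 | 1 => mkRect 10 10 8 8 | _ => mkRect 18 18 8 8 end.
Definition B36 (j : nat) : rect :=
  match j with
  | 0 => mkRect 0 13 4 2 | 1 => mkRect 5 16 2 4 | 2 => mkRect 8 21 4 2
  | 3 => mkRect 13 0 2 4 | 4 => mkRect 16 5 4 2 | _ => mkRect 21 8 2 4 end.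

Lemma K36 : TRVG (Kpq_adj 3 6).
Proof.
  apply (TRVG_bip 3 6 24 24 A36 B36); try lra.
  - intros i Hi; destruct i as [|[|[|i]]]; try lia; unfold okr; simpl; lra.
  - intros i Hi; destruct i as [|[|[|[|[|[|i]]]]]]; try lia; unfold okr; simpl; lra.
  - intros i i' Hi Hi' ne; destruct i as [|[|[|i]]]; try lia;
      destruct i' as [|[|[|i']]]; try lia; unfold m3; simpl; solve_goal.
  - intros i i' Hi Hi' ne; destruct i as [|[|[|[|[|[|i]]]]]]; try lia;
      destruct i' as [|[|[|[|[|[|i']]]]]]; try lia; unfold m3; simpl; solve_goal.
  - intros i i' Hi Hi'; destruct i as [|[|[|i]]]; try lia;
      destruct i' as [|[|[|[|[|[|i']]]]]]; try lia; unfold m3; simpl; solve_goal.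
Qed.

Definition A44 (i : nat) : rect :=
  match i with 0 => mkRect 0 0 3 3 | 1 => mkRect 4 12 3 3 | 2 => mkRect 8 8 3 3
  | _ => mkRect 12 4 3 3 end.
Definition B44 (j : nat) : rect :=
  match j with 0 => mkRect 2 6 3 3 | 1 => mkRect 6 2 3 3 | 2 => mkRect 10 14 3 3
  | _ => mkRect 14 10 3 3 end.

Lemma K44 : TRVG (Kpq_adj 4 4).
Proof.
  apply (TRVG_bip 4 4 16 16 A44 B44); try lra.
  - intros i Hi; destruct i as [|[|[|[|i]]]]; try lia; unfold okr; simpl; lra.
  - intros i Hi; destruct i as [|[|[|[|i]]]]; try lia; unfold okr; simpl; lra.
  - intros i i' Hi Hi' ne; destruct i as [|[|[|[|i]]]]; try lia;
      destruct i' as [|[|[|[|i']]]]; try lia; unfold m3; simpl; solve_goal.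
  - intros i i' Hi Hi' ne; destruct i as [|[|[|[|i]]]]; try lia;
      destruct i' as [|[|[|[|i']]]]; try lia; unfold m3; simpl; solve_goal.
  - intros i i' Hi Hi'; destruct i as [|[|[|[|i]]]]; try lia;
      destruct i' as [|[|[|[|i']]]]; try lia; unfold m3; simpl; solve_goal.
Qed.

Lemma INR_lt1 (a b : nat) : (a < b)%nat -> INR a + 1 <= INR b.
Proof. intro h; rewrite <- S_INR; apply le_INR; lia. Qed.

Definition A2 (q : nat) (i : nat) : rect :=
  match i with 0 => mkRect 0 (INR q) (INR q) 1 | _ => mkRect (INR q + 1) 0 1 (INR q) end.
Definition B2 (j : nat) : rect := mkRect (INR j) (INR j) 1 1.

Lemma K2q (q : nat) : (1 <= q)%nat -> TRVG (Kpq_adj 2 q).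
Proof.
  intro hq. assert (Hq : 1 <= INR q) by (apply (le_INR 1); exact hq).
  apply (TRVG_bip 2 q (INR q + 2) (INR q + 2) (A2 q) B2); try lra.
  - intros i Hi; destruct i as [|[|i]]; try lia; unfold okr; simpl; lra.
  - intros j Hj; pose proof (INR_lt1 _ _ Hj); pose proof (pos_INR j);
      unfold okr; simpl; lra.
  - intros i i' Hi Hi' ne; destruct i as [|[|i]]; try lia;
      destruct i' as [|[|i']]; try lia; unfold m3; simpl; solve_goal.
  - intros j j' Hj Hj' ne.
    pose proof (INR_lt1 _ _ Hj); pose proof (pos_INR j);
    pose proof (INR_lt1 _ _ Hj'); pose proof (pos_INR j').
    assert (D : (j < j')%nat \/ (j' < j)%nat) by lia.
    destruct D as [D|D]; apply INR_lt1 in D; unfold m3; simpl; solve_goal.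
  - intros i j Hi Hj; pose proof (INR_lt1 _ _ Hj); pose proof (pos_INR j);
      destruct i as [|[|i]]; try lia; unfold m3; simpl; solve_goal.
Qed.

Lemma restrict (p q p' q' : nat) : (p' <= p)%nat -> (q' <= q)%nat ->
  TRVG (Kpq_adj p q) -> TRVG (Kpq_adj p' q').
Proof.
  intros hp hq [W [H [f [HW [HH [Hval [Hov Hadj]]]]]]].
  set (g := fun v : Kpq_vertex p' q' => match v with
     | inl (exist _ i Hi) => (inl (exist _ i (Nat.lt_le_trans _ _ _ Hi hp)) : Kpq_vertex p q)
     | inr (exist _ j Hj) => inr (exist _ j (Nat.lt_le_trans _ _ _ Hj hq)) end).
  assert (ginj : forall u v, u <> v -> g u <> g v).
  { intros [[i Hi]|[j Hj]] [[i' Hi']|[j' Hj']] ne E; simpl in E; try discriminate;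
      injection E; intro; subst; apply ne; do 2 f_equal; apply le_unique. }
  exists W, H, (fun v => f (g v)).
  split; [exact HW|]. split; [exact HH|]. split; [intro v; apply Hval|]. split.
  - intros u v ne; apply Hov, ginj, ne.
  - intros u v ne. rewrite <- (Hadj _ _ (ginj _ _ ne)).
    destruct u as [[i Hi]|[j Hj]]; destruct v as [[i' Hi']|[j' Hj']]; simpl; tauto.
Qed.

Theorem theorem5 (p q : nat) (hp : (1 <= p)%nat) (hpq : (p <= q)%nat) :
  TRVG (Kpq_adj p q) <->
  ((p <= 2)%nat \/
   (p = 3 /\ q = 3)%nat \/ (p = 3 /\ q = 4)%nat \/ (p = 3 /\ q = 5)%nat \/
   (p = 3 /\ q = 6)%nat \/ (p = 4 /\ q = 4)%nat).
Proof.
  split.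
  - intro HT. pose proof (necessity p q HT) as Hn.
    assert (p <= 4)%nat by nia.
    destruct p as [|[|[|[|[|p]]]]]; try lia.
  - intros H.
    destruct H as [H|[[-> ->]|[[-> ->]|[[-> ->]|[[-> ->]|[-> ->]]]]]].
    + apply (restrict 2 q); try lia. apply K2q; lia.
    + apply (restrict 3 6); try lia; apply K36.
    + apply (restrict 3 6); try lia; apply K36.
    + apply (restrict 3 6); try lia; apply K36.
    + apply K36.
    + apply K44.
Qed.
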